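(* Let $\tau \ge 2$ be an integer and let $(X,\mathcal{B})$ be a $3$-$(v,k,1)$-design with $k \ge \tau(\tau-1)+1$. Let $\sigma = \tau k - \tau(\tau-1)$. Then the union of any $\tau$ distinct blocks contains at least $\sigma$ points and the union of any $\tau-1$ blocks contains at most $\sigma-1$ points; consequently, using a base $(\sigma,v)$-threshold scheme with this distribution design yields an expanded threshold scheme with threshold $\tau$.
   Context: A $t$-$(v,k,\lambda)$-design is a set $X$ of $v$ points together with a collection $\mathcal{B}$ of $k$-subsets of $X$ (blocks) such that every $t$-subset of $X$ lies in exactly $\lambda$ blocks. A distribution design $(X,\mathcal{B})$ with $|X|=m$, $|\mathcal{B}|=n$ combined with a base $(\sigma,m)$-threshold scheme gives each player (one per block) the subshares indexed by the points of its block; if the union of any $\tau$ blocks has at least $\sigma$ points and the union of any $\tau-1$ blocks has at most $\sigma-1$ points, the resulting expanded scheme is a $(\tau,n)$-threshold scheme. *)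

(* Defs.v *)
From mathcomp Require Import all_boot.
Set Implicit Arguments. Unset Strict Implicit. Unset Printing Implicit Defensive.

(* Blocks are stored as a set of sets (for t = 3,
   lambda = 1, k >= 3 there can be no repeated blocks anyway). *)
Definition is_design (T : finType) (t v k lambda : nat) (B : {set {set T}}) : Prop :=
  [/\ #|T| = v,
      (forall b, b \in B -> #|b| = k) &
      (forall S : {set T}, #|S| = t -> #|[set b in B | S \subset b]| = lambda)].

Definition sigma_thr (tau k : nat) : nat := tau * k - tau * (tau - 1).

Definition distribution_threshold (T : finType) (B : {set {set T}}) (tau sigma : nat) : Prop :=
  (forall Bs : {set {set T}}, Bs \subset B -> #|Bs| = tau ->
      sigma <= #|\bigcup_(b in Bs) b|) /\
  (forall Bs : {set {set T}}, Bs \subset B -> #|Bs| = tau.-1 ->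
      #|\bigcup_(b in Bs) b| <= sigma.-1).

(* Main.v *)
Require Import Defs.
From mathcomp Require Import all_boot.
From mathcomp Require Import zify.

Set Implicit Arguments. Unset Strict Implicit. Unset Printing Implicit Defensive.

Lemma card_bigcup_le (T I : finType) (A : {set I}) (F : I -> {set T}) :
  #|\bigcup_(i in A) F i| <= \sum_(i in A) #|F i|.
Proof.
elim/big_rec2: _ => [|i n U _ h]; first by rewrite cards0.
have [h1 _] := leq_card_setU (F i) U.
by apply: leq_trans h1 _; rewrite leq_add2l.
Qed.

Lemma inter_le2 (T : finType) v k (B : {set {set T}}) b b' :
  is_design 3 v k 1 B -> b \in B -> b' \in B -> b != b' -> #|b :&: b'| <= 2.
Proof.
move=> [_ _ H3] hb hb' hne; rewrite leqNgt; apply/negP => /card_geqP [s [us ss subs]].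
have hS : #|[set x in s]| = 3 by rewrite cardsE (card_uniqP us).
have := H3 _ hS => h1.
have : 1 < #|[set c in B | [set x in s] \subset c]|.
  apply/card_gt1P; exists b, b'; rewrite !inE hb hb' hne; split => //.
  - by apply/subsetP => x; rewrite inE => /subs; rewrite inE => /andP [].
  - by apply/subsetP => x; rewrite inE => /subs; rewrite inE => /andP [].
by rewrite h1.
Qed.

Lemma lower_aux (T : finType) v k (B : {set {set T}}) :
  is_design 3 v k 1 B -> forall n (Bs : {set {set T}}), Bs \subset B -> #|Bs| = n ->
  k * n <= #|\bigcup_(b in Bs) b| + n * (n - 1).
Proof.
move=> hD; elim=> [|n IH] Bs sB hc; first by rewrite muln0.
have : 0 < #|Bs| by rewrite hc.
case/card_gt0P => b0 hb0.
have hc' : #|Bs :\ b0| = n by move: hc; rewrite (cardsD1 b0) hb0 => /eqP; rewrite eqSS => /eqP.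
have sB' : Bs :\ b0 \subset B by apply: subset_trans (subsetDl _ _) sB.
have := IH _ sB' hc' => ih.
have hb0B : b0 \in B by apply: (subsetP sB).
have hk : #|b0| = k by case: hD => _ h _; apply: h.
rewrite (big_setD1 _ hb0) /= cardsU.
set U' := \bigcup_(b in Bs :\ b0) b.
have hI : #|b0 :&: U'| <= 2 * n.
  have sub : b0 :&: U' \subset \bigcup_(b in Bs :\ b0) (b0 :&: b).
    apply/subsetP => x; rewrite inE => /andP [xb0 /bigcupP [b hb xb]].
    by apply/bigcupP; exists b => //; rewrite inE xb0.
  apply: leq_trans (subset_leq_card sub) _.
  apply: leq_trans (card_bigcup_le _ _) _.
  apply: leq_trans (_ : \sum_(b in Bs :\ b0) 2 <= _).
    apply: leq_sum => b; rewrite !inE => /andP [hne hb].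
    apply: (inter_le2 hD hb0B (subsetP sB _ hb)); by rewrite eq_sym.
  by rewrite sum_nat_const hc' mulnC.
have hI2 : #|b0 :&: U'| <= #|b0| by apply: subset_leq_card; apply: subsetIl.
rewrite hk in hI2 *.
have e : n.+1 * (n.+1 - 1) = n * (n - 1) + 2 * n by rewrite subSS subn0; case: (n) => [|m] //; rewrite subSS subn0 !mulSn !mulnS; lia.
rewrite e mulnS; rewrite -/U' in ih; clearbody U'; lia.
Qed.

Theorem mainTheorem6 (T : finType) (v k tau : nat) (B : {set {set T}}) :
  2 <= tau ->
  is_design 3 v k 1 B ->
  tau * (tau - 1) + 1 <= k ->
  distribution_threshold B tau (sigma_thr tau k).
Proof.
move=> ht hD hk; split.
- move=> Bs sB hc; have := lower_aux hD sB hc; rewrite /sigma_thr; lia.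
- move=> Bs sB hc.
  apply: leq_trans (card_bigcup_le _ _) _.
  have hsz : \sum_(b in Bs) #|b| = \sum_(b in Bs) k.
    by apply: eq_bigr => b hb; case: hD => _ h _; apply: h; apply: (subsetP sB).
  rewrite hsz sum_nat_const hc /sigma_thr.
  case: tau ht hk {hc} => // t _ hk /=.
  nia.
Qed.
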